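(* Let $\lambda=(\lambda_1,\dots,\lambda_r)$ be a partition of $n$. Identify $\mathbb{C}[E_\lambda]$ with $\mathbb{C}[y_1,\dots,y_r]$, where $y_1$ is the common value of $x_i$ for $1\le i\le\lambda_1$, $y_2$ the common value of $x_i$ for $\lambda_1<i\le\lambda_1+\lambda_2$, etc. Then the pullback along the (surjective) composite map $E_\lambda\to X_\lambda\to X_\lambda/S_n$ identifies $\mathcal{O}(X_\lambda/S_n)$ with the subalgebra of $\mathbb{C}[y_1,\dots,y_r]$ generated by the Newton $\lambda$-sums $P_{i,\lambda}(y_1,\dots,y_r)=\lambda_1y_1^i+\cdots+\lambda_ry_r^i$, $i=1,2,\dots$
   Context: Work over $\mathbb{C}$. $E_\lambda\subset\mathbb{C}^n$ is the subspace defined by $x_1=\cdots=x_{\lambda_1}$, $x_{\lambda_1+1}=\cdots=x_{\lambda_1+\lambda_2}$, ..., $x_{n-\lambda_r+1}=\cdots=x_n$; $X_\lambda=S_n\cdot E_\lambda$ is the union of its $S_n$-translates, and $\mathcal{O}(X_\lambda/S_n)=\mathcal{O}(X_\lambda)^{S_n}$. *)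

(* Defs.v *)
From HB Require Import structures.
From mathcomp Require Import all_boot all_fingroup all_algebra.
From mathcomp Require Import reals.
From mathcomp Require Import complex.
From mathcomp Require Import mpoly.

Set Implicit Arguments.
Unset Strict Implicit.
Unset Printing Implicit Defensive.
Import GRing.Theory.
Local Open Scope ring_scope.

(* A partition lam = (lam_1,...,lam_r) of n : positive parts, non-increasing,
   summing to n (stated as hypotheses of the theorem). *)

(* So coordinates
   0 .. lam_1 - 1 are in block 0, lam_1 .. lam_1+lam_2-1 in block 1, etc. *)
Definition blk (lam : seq nat) (i : nat) : nat :=
  count (fun j => (\sum_(k < j.+1) nth 0 lam k <= i)%N) (iota 0 (size lam)).

(* extension of y : 'I_r -> C by 0 outside 0..r-1 (never used for i < n) *)
Definition ext (C : nzRingType) (r : nat) (y : 'I_r -> C) (j : nat) : C :=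
  if insub j is Some j' then y j' else 0.

Section Defs.
Variable C : comNzRingType.
Variable n : nat.
Variable lam : seq nat.
Local Notation r := (size lam).

Definition Epoint (y : 'I_r -> C) : 'I_n -> C := fun i => ext y (blk lam i).

(* X_lam = S_n . E_lam (S_n acting by permuting coordinates) *)
Definition in_X (x : 'I_n -> C) : Prop :=
  exists (s : 'S_n) (y : 'I_r -> C), x = (fun i => Epoint y (s i)).

(* f in C[x_1..x_n] whose class in O(X_lam) is S_n-invariant *)
Definition invariant_on_X (f : {mpoly C[n]}) : Prop :=
  forall x, in_X x -> forall s : 'S_n, f.@[fun i => x (s i)] = f.@[x].

(* f vanishes on X_lam, i.e. its class in O(X_lam) is zero *)
Definition vanishes_on_X (f : {mpoly C[n]}) : Prop :=
  forall x, in_X x -> f.@[x] = 0.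

Definition yvar (i : 'I_n) : {mpoly C[r]} :=
  if insub (blk lam i) is Some j then 'X_j else 0.

(* pullback of f along E_lam -> C^n, identifying C[E_lam] = C[y_1..y_r] *)
Definition pullback (f : {mpoly C[n]}) : {mpoly C[r]} :=
  comp_mpoly [tuple yvar i | i < n] f.

Definition newton_sum (k : nat) : {mpoly C[r]} :=
  \sum_(j < r) (nth 0 lam j)%:R *: 'X_j ^+ k.

End Defs.

Inductive gen_subalg (R : comNzRingType) (A : algType R) (G : A -> Prop) : A -> Prop :=
  | gen_base a : G a -> gen_subalg G a
  | gen_scalar (c : R) : gen_subalg G (c%:A)
  | gen_add a b : gen_subalg G a -> gen_subalg G b -> gen_subalg G (a + b)
  | gen_mul a b : gen_subalg G a -> gen_subalg G b -> gen_subalg G (a * b).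

(* Main.v *)
Require Import Defs.
From HB Require Import structures.
From mathcomp Require Import all_boot all_fingroup all_algebra.
From mathcomp Require Import reals.
From mathcomp Require Import complex.
From mathcomp Require Import mpoly.
From mathcomp Require Import ring zify.
From Stdlib Require Import FunctionalExtensionality.
Set Implicit Arguments.
Unset Strict Implicit.
Unset Printing Implicit Defensive.
Local Open Scope ring_scope.
Import GRing.Theory Num.Theory.
Section Zero.
Variable K : numFieldType.

Lemma rmorph_mpoly_eq n (S : comNzRingType) (f g : {rmorphism {mpoly K[n]} -> S}) :
  (forall c, f c%:MP = g c%:MP) -> (forall i, f 'X_i = g 'X_i) -> forall p, f p = g p.
Proof.
move=> hc hx p; rewrite (mpolyE p) !rmorph_sum; apply: eq_bigr => m _.
rewrite -mul_mpolyC !rmorphM hc mpolyXE_id !rmorph_prod; congr (_ * _).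
by apply: eq_bigr => i _; rewrite !rmorphXn hx.
Qed.

Lemma muniX n (i : 'I_n.+1) : muni 'X_i =
  match split (cast_ord (esym (addn1 n)) i) with
  | inl j => ('X_j)%:P
  | inr _ => 'X
  end :> {poly {mpoly K[n]}}.
Proof. by rewrite /muni mmapX mmap1U. Qed.

Lemma muni_eval n (p : {mpoly K[n.+1]}) (v : 'I_n.+1 -> K) :
  p.@[v] = (map_poly (meval (fun i => v (widen_ord (leqnSn n) i))) (muni p)).[v ord_max].
Proof.
pose g := (horner_eval (v ord_max) \o map_poly (meval (fun i => v (widen_ord (leqnSn n) i)))) \o (@muni n K).
have -> : (map_poly (meval (fun i => v (widen_ord (leqnSn n) i))) (muni p)).[v ord_max] = g p by [].
apply: (rmorph_mpoly_eq (f := meval v) (g := g)) => [c|i].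
  by rewrite /g /= mevalC muniC map_polyC /= horner_evalE hornerC mevalC.
rewrite /g /= mevalXU muniX horner_evalE; case: splitP => j hj.
  rewrite map_polyC hornerC /= mevalXU; congr v; apply/val_inj => /=; by rewrite -hj.
rewrite map_polyX hornerX; congr v; apply/val_inj => /=.
by move: hj; rewrite ord1 addn0 /= => ->.
Qed.

Lemma muni_inj n (p : {mpoly K[n.+1]}) : muni p = 0 -> p = 0.
Proof.
pose g := (horner_eval ('X_ord_max : {mpoly K[n.+1]}) \o map_poly (@mwiden n K)) \o (@muni n K).
have gid : forall q, g q = idfun q.
  apply: (rmorph_mpoly_eq (f := g) (g := idfun)) => [c|i].
    by rewrite /g /= muniC map_polyC horner_evalE hornerC /= mwidenC.
  rewrite /g /= muniX horner_evalE; case: splitP => j hj.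
    rewrite map_polyC hornerC /= mwidenX mnmwiden1; congr 'X_(_); apply/val_inj => /=; by rewrite -hj.
  rewrite map_polyX hornerX; congr 'X_(_); apply/val_inj => /=.
  by move: hj; rewrite ord1 addn0 /= => ->.
move=> h; by rewrite -[p]gid /g /= h map_poly0 horner_evalE horner0.
Qed.

Lemma poly_zero (q : {poly K}) : (forall a, q.[a] = 0) -> q = 0.
Proof.
move=> h; apply: (@roots_geq_poly_eq0 _ q [seq i%:R | i <- iota 0 (size q)]).
- by apply/allP => x /mapP [i _ ->]; apply/rootP; exact: h.
- rewrite map_inj_uniq ?iota_uniq // => a b /eqP; rewrite eqr_nat => /eqP.
  by [].
- by rewrite size_map size_iota.
Qed.

Lemma mpoly_zero n (p : {mpoly K[n]}) : (forall v, p.@[v] = 0) -> p = 0.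
Proof.
elim: n p => [|n IH] p h.
  have := h (fun _ => 0); rewrite (nvar0_mpolyC p) mevalC => ->.
  by rewrite mpolyC0.
apply: muni_inj; apply/polyP => k; rewrite coef0; apply: IH => w.
pose q := map_poly (meval w) (muni p).
have q0 : q = 0.
  apply: poly_zero => a.
  pose v := fun i : 'I_n.+1 => if insub (val i) is Some j then w j else a.
  have := h v; rewrite muni_eval.
  have -> : v ord_max = a by rewrite /v insubF //= ltnn.
  have -> : map_poly (meval (fun i => v (widen_ord (leqnSn n) i))) (muni p) = q.
    by apply: eq_map_poly => x; apply: meval_eq => i; rewrite /v /= valK.
  by [].
have := congr1 (fun r : {poly K} => r`_k) q0; by rewrite /= coef_map coef0.
Qed.
End Zero.
Section Newton.
Variable A : comNzRingType.
Implicit Types (s : seq A).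

Definition Es s : {poly A} := \prod_(a <- s) (a%:P * 'X + 1).
Definition ps s i : A := \sum_(a <- s) a ^+ i.
Definition Qs s k : {poly A} := \sum_(i < k) ((-1) ^+ i * ps s i.+1)%:P * 'X^i.

Lemma qa_tel (a : A) k :
  (\sum_(i < k) ((-1) ^+ i * a ^+ i.+1)%:P * 'X^i) * (a%:P * 'X + 1)
  = a%:P - ((-1) ^+ k * a ^+ k.+1)%:P * 'X^k.
Proof.
elim: k => [|k IH]; first by rewrite big_ord0 mul0r expr0 mul1r expr1 mulr1 subrr.
rewrite big_ord_recr /= mulrDl IH !rmorphM !rmorphXn /= rmorphN1.
rewrite !exprS; ring.
Qed.

Lemma newton_key s k : exists G, Qs s k * Es s = (Es s)^`() + 'X^k * G.
Proof.
elim: s => [|a s [G IH]].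
  exists 0; rewrite /Qs /Es big_nil mulr0 addr0 mulr1.
  rewrite big1 -?polyC1 ?derivC // => i _; by rewrite /ps big_nil mulr0 mul0r.
exists ((a%:P * 'X + 1) * G - ((-1) ^+ k * a ^+ k.+1)%:P * Es s).
have -> : Qs (a :: s) k = \sum_(i < k) ((-1) ^+ i * a ^+ i.+1)%:P * 'X^i + Qs s k.
  rewrite /Qs -big_split /=; apply: eq_bigr => i _.
  by rewrite /ps big_cons mulrDr rmorphD mulrDl.
have dA : (a%:P * 'X + 1)^`() = a%:P :> {poly A}.
  by rewrite derivD -polyC1 derivC addr0 deriv_mulC derivX mulr1.
rewrite /Es big_cons -/(Es s) derivM dA.
set q := \sum_(i < k) _.
have -> : (q + Qs s k) * ((a%:P * 'X + 1) * Es s) =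
   (q * (a%:P * 'X + 1)) * Es s + (a%:P * 'X + 1) * (Qs s k * Es s) by ring.
rewrite qa_tel IH; ring.
Qed.

Lemma newton s k :
  (Es s)`_k.+1 *+ k.+1 = \sum_(j < k.+1) (-1) ^+ j * ps s j.+1 * (Es s)`_(k - j).
Proof.
have [G h] := newton_key s k.+1.
have := congr1 (fun p : {poly A} => p`_k) h.
rewrite /= coefD coefXnM ltnSn addr0 coef_deriv => <-.
rewrite coefM; apply: eq_bigr => j _.
rewrite /Qs coef_sum (bigD1 j) //= big1 ?addr0.
  by rewrite coefCM coefXn eqxx mulr1.
move=> i /eqP hij; rewrite coefCM coefXn.
case: eqP => [e|]; last by rewrite mulr0.
by case: hij; apply/val_inj; rewrite /= e.
Qed.
End Newton.
Section Blk.
Variable lam : seq nat.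
Local Notation r := (size lam).
Definition Ssum m := (\sum_(k < m) nth 0 lam k)%N.

Lemma Ssum_mono m d : (Ssum m <= Ssum (m + d))%N.
Proof.
elim: d => [|d IH]; first by rewrite addn0.
by rewrite addnS /Ssum big_ord_recr /=; exact: leq_trans IH (leq_addr _ _).
Qed.

Lemma Ssum_le m m' : (m <= m')%N -> (Ssum m <= Ssum m')%N.
Proof. by move=> h; rewrite -(subnKC h); apply: Ssum_mono. Qed.

Lemma SsumS m : Ssum m.+1 = (Ssum m + nth 0 lam m)%N.
Proof. by rewrite /Ssum big_ord_recr. Qed.

Lemma Ssum_r : Ssum r = sumn lam.
Proof. by rewrite /Ssum sumnE (big_nth 0) big_mkord. Qed.

Lemma blk_ge i j : (j <= r)%N -> (j <= blk lam i)%N = (Ssum j <= i)%N.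
Proof.
move=> hj; rewrite /blk -(subnKC hj) iotaD count_cat add0n.
case: (leqP (Ssum j) i) => h.
  rewrite (@eq_in_count _ _ predT) ?count_predT ?size_iota ?leq_addr //.
  move=> x; rewrite mem_iota add0n => /andP [_ hx] /=.
  exact: leq_trans (Ssum_le hx) h.
case: j hj h => [|j] hj h; first by rewrite /Ssum big_ord0 in h.
rewrite (@eq_in_count _ _ pred0 (iota j.+1 _)) ?count_pred0; last first.
  move=> x; rewrite mem_iota => /andP [hx _] /=; apply/negbTE; rewrite -ltnNge.
  by apply: leq_trans h _; apply: Ssum_le; apply: leqW.
rewrite -addn1 iotaD count_cat /= add0n addn0.
have -> : (\sum_(k < j.+1) nth 0 lam k <= i)%N = false by apply/negbTE; rewrite -ltnNge.
have := count_size (fun j0 => (\sum_(k < j0.+1) nth 0 lam k <= i)%N) (iota 0 j).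
rewrite size_iota /= addn0; move=> hc; apply/negbTE; rewrite -ltnNge; by rewrite addn1 ltnS addn0.
Qed.

Lemma blk_lt i : (i < sumn lam)%N -> (blk lam i < r)%N.
Proof. by move=> h; rewrite ltnNge blk_ge // Ssum_r -ltnNge. Qed.

Lemma blk_eq i j : (j < r)%N -> (blk lam i == j) = (Ssum j <= i < Ssum j.+1)%N.
Proof.
move=> hj; rewrite eqn_leq andbC -blk_ge ?(ltnW hj) //; congr andb.
by rewrite leqNgt blk_ge // ltnNge.
Qed.

Lemma sum_range n a b : (\sum_(i < n) ((a <= i < b)%N : nat) = minn b n - minn a n)%N.
Proof.
elim: n => [|n IH]; first by rewrite big_ord0 !minn0.
rewrite big_ord_recr /= IH.
case: (leqP a n) => ha; case: (ltnP n b) => hb /=; lia.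
Qed.

Lemma count_blk n j : sumn lam = n -> (j < r)%N ->
  (\sum_(i < n) ((blk lam i == j) : nat))%N = nth 0%N lam j.
Proof.
move=> hn hj; under eq_bigr => i _ do rewrite blk_eq //.
rewrite sum_range.
have h1 : (Ssum j.+1 <= n)%N by rewrite -hn -Ssum_r; apply: Ssum_le.
have h2 : (Ssum j <= Ssum j.+1)%N by apply: Ssum_le.
rewrite SsumS in h1 h2 *; lia.
Qed.
End Blk.
Section Main.
Variable K : numFieldType.
Variable n : nat.
Variable lam : seq nat.
Hypothesis Hsum : sumn lam = n.
Local Notation r := (size lam).

Lemma pullback_eval (f : {mpoly K[n]}) y : (pullback lam f).@[y] = f.@[@Epoint K n lam y].
Proof.
rewrite /pullback comp_mpoly_meval; apply: meval_eq => i.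
rewrite tnth_mktuple /yvar /Epoint /ext; case: insub => [j|].
  by rewrite mevalXU.
by rewrite meval0.
Qed.

Lemma msym_eval (s : 'S_n) (p : {mpoly K[n]}) v :
  (msym s p).@[v] = p.@[fun i => v (s i)].
Proof.
rewrite -[msym s p]comp_mpoly_id msym_mPo comp_mpoly_meval; apply: meval_eq => i.
by rewrite !tnth_mktuple mevalXU.
Qed.

Lemma Epoint_in_X y : in_X lam (@Epoint K n lam y).
Proof. by exists 1%g, y; apply: functional_extensionality => i; rewrite perm1. Qed.

Lemma part1 (f : {mpoly K[n]}) : invariant_on_X lam f ->
  pullback lam f = 0 -> vanishes_on_X lam f.
Proof.
move=> hinv h0 x [s [y ->]].
rewrite (hinv _ (Epoint_in_X y)) -pullback_eval h0 meval0.
by [].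
Qed.

Definition psum k : {mpoly K[n]} := \sum_(i < n) 'X_i ^+ k.

Lemma psum_inv k : invariant_on_X lam (psum k).
Proof.
rewrite /invariant_on_X => x _ s; rewrite /psum !rmorph_sum /=.
rewrite [RHS](reindex_inj (@perm_inj _ s)) /=; apply: eq_bigr => i _.
by rewrite !rmorphXn /= !mevalXU.
Qed.

Lemma yvarX (i : 'I_n) k : (yvar K lam i) ^+ k =
  \sum_(j < r) ((blk lam i == j) : nat)%:R *: 'X_j ^+ k :> {mpoly K[r]}.
Proof.
have hi : (blk lam i < r)%N by apply: blk_lt; rewrite Hsum.
rewrite /yvar insubT /= (bigD1 (Ordinal hi)) //= eqxx scale1r big1 ?addr0 //.
move=> j hj; suff -> : (blk lam i == j) = false by rewrite scale0r.
apply/negbTE; apply: contra hj => /eqP e; apply/eqP/val_inj; by rewrite /= e.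
Qed.

Lemma sum_yvarX k : \sum_(i < n) (yvar K lam i) ^+ k = newton_sum K lam k.
Proof.
under eq_bigr => i _ do rewrite yvarX.
rewrite exchange_big /newton_sum; apply: eq_bigr => j _.
rewrite -scaler_suml -natr_sum count_blk //.
Qed.

Lemma pullback_psum k : pullback lam (psum k) = newton_sum K lam k.
Proof.
rewrite /pullback /psum rmorph_sum /= -sum_yvarX; apply: eq_bigr => i _.
by rewrite rmorphXn /= comp_mpolyXU -tnth_nth tnth_mktuple.
Qed.


Definition ys := [seq yvar K lam i | i <- enum 'I_n].

Lemma prod_if (J : {set 'I_n}) :
  \prod_(i < n) (if i \in J then (yvar K lam i)%:P * 'X else 1)
  = (\prod_(i < n) (if i \in J then yvar K lam i else 1))%:P * 'X^#|J|.
Proof.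
rewrite rmorph_prod /=.
have -> : 'X^#|J| = \prod_(i < n) (if i \in J then 'X else 1) :> {poly {mpoly K[r]}}.
  by rewrite -big_mkcond /= prodr_const.
rewrite -big_split /=; apply: eq_bigr => i _; case: (i \in J) => //.
by rewrite polyC1 mulr1.
Qed.

Lemma Es_pullback k : (Es ys)`_k = pullback lam (mesym n K k).
Proof.
rewrite /Es /ys big_map big_enum /=.
rewrite (eq_bigl xpredT) //.
rewrite (@bigA_distr _ 0 1 *%R +%R _ (fun i => (yvar K lam i)%:P * 'X) (fun _ => 1)) coef_sum mesymE /pullback raddf_sum /=.
rewrite [RHS]big_mkcond /=; apply: eq_bigr => J _.
rewrite prod_if coefCM coefXn eq_sym.
case: eqP => _; last by rewrite mulr0.
rewrite mulr1 comp_mpolyX; apply: eq_bigr => i _.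
rewrite tnth_mktuple /mesym1 mnmE; case: (i \in J) => //=.
Qed.


Local Notation G := (fun p : {mpoly K[r]} => exists k, (0 < k)%N /\ p = newton_sum K lam k).
Local Notation gs := (gen_subalg G).

Lemma gsZ c a : gs a -> gs (c *: a).
Proof. by move=> h; rewrite -mulr_algl; apply: gen_mul => //; apply: gen_scalar. Qed.

Lemma gs0 : gs 0.
Proof. by rewrite -(scale0r (1 : {mpoly K[r]})); apply: gen_scalar. Qed.

Lemma gs1 : gs 1.
Proof. by rewrite -(scale1r (1 : {mpoly K[r]})); apply: gen_scalar. Qed.

Lemma gs_sum (I : Type) (s : seq I) (P : pred I) F :
  (forall i, P i -> gs (F i)) -> gs (\sum_(i <- s | P i) F i).
Proof. by move=> h; apply: big_ind => //; [exact: gs0 | exact: gen_add]. Qed.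

Lemma gs_prod (I : Type) (s : seq I) (P : pred I) F :
  (forall i, P i -> gs (F i)) -> gs (\prod_(i <- s | P i) F i).
Proof. by move=> h; apply: big_ind => //; [exact: gs1 | exact: gen_mul]. Qed.

Lemma gsX a k : gs a -> gs (a ^+ k).
Proof.
move=> h; elim: k => [|k IH]; first by rewrite expr0; exact: gs1.
by rewrite exprS; apply: gen_mul.
Qed.

Lemma ps_ys k : ps ys k = newton_sum K lam k.
Proof. by rewrite /ps /ys big_map big_enum (eq_bigl xpredT) //= sum_yvarX. Qed.

Lemma gs_Es k : gs ((Es ys)`_k).
Proof.
elim/ltn_ind: k => k; case: k => [|k] IH.
  rewrite Es_pullback mesym0E /pullback comp_mpoly1; exact: gs1.
have h := newton ys k.
have -> : (Es ys)`_k.+1 = ((k.+1)%:R : K)^-1 *: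
    \sum_(j < k.+1) (-1) ^+ j * ps ys j.+1 * (Es ys)`_(k - j).
  by rewrite -h -scaler_nat scalerA mulVf ?scale1r // pnatr_eq0.
apply: gsZ; apply: gs_sum => j _; apply: gen_mul; last first.
  by apply: IH; rewrite ltnS leq_subr.
apply: gen_mul; last by apply: gen_base; exists j.+1; rewrite ps_ys.
apply: gsX; rewrite -scaleN1r; apply: gsZ; exact: gs1.
Qed.

Lemma part_hard (f : {mpoly K[n]}) : invariant_on_X lam f -> gs (pullback lam f).
Proof.
move=> hinv.
pose F := \sum_(s : 'S_n) msym s f.
have symF : F \is symmetric.
  apply/issymP => t; rewrite /F raddf_sum /=.
  under eq_bigr => s _ do rewrite -msymMm.
  by rewrite [RHS](reindex_inj (mulIg t)).
have hF : pullback lam F = (n`!)%:R *: pullback lam f.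
  apply/eqP; rewrite -subr_eq0; apply/eqP; apply: mpoly_zero => y.
  rewrite mevalB mevalZ !pullback_eval /F raddf_sum /=.
  under eq_bigr => s _ do rewrite msym_eval (hinv _ (Epoint_in_X y)).
  rewrite sumr_const card_Sn; ring.
have [t [ht _]] := sym_fundamental symF.
have -> : pullback lam f = ((n`!)%:R : K)^-1 *: pullback lam F.
  by rewrite hF scalerA mulVf ?scale1r // pnatr_eq0 -lt0n fact_gt0.
apply: gsZ; rewrite -ht comp_mpolyEX /pullback raddf_sum; apply: gs_sum => m _.
rewrite /= linearZ /= comp_mpolyX rmorph_prod; apply: gsZ; apply: gs_prod => i _.
rewrite rmorphXn; apply: gsX.
rewrite tnth_mktuple; have := gs_Es i.+1; rewrite Es_pullback; exact.
Qed.

Lemma part_easy g : gs g -> exists f : {mpoly K[n]}, invariant_on_X lam f /\ pullback lam f = g.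
Proof.
elim => [a [k [_ ->]] | c | a b _ [fa [ia ea]] _ [fb [ib eb]]
        | a b _ [fa [ia ea]] _ [fb [ib eb]]].
- by exists (psum k); split; [exact: psum_inv | exact: pullback_psum].
- exists c%:MP; split; first by move=> x _ s; rewrite !mevalC.
  by rewrite /pullback comp_mpolyC alg_mpolyC.
- exists (fa + fb); split; first by move=> x hx s; rewrite !mevalD ia ?ib.
  by rewrite -ea -eb /pullback raddfD.
- exists (fa * fb); split; first by move=> x hx s; rewrite !mevalM ia ?ib.
  by rewrite -ea -eb /pullback rmorphM.
Qed.

End Main.

Theorem proposition2p2 (R : realType) (n : nat) (lam : seq nat)
    (Hsum : sumn lam = n) (Hpos : all (fun k => 0 < k)%N lam)
    (Hsorted : sorted geq lam) :
  (* the pullback O(X_lam/S_n) -> C[y_1..y_r] is injective *)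
  (forall f : {mpoly (R[i])[n]}, invariant_on_X lam f ->
     pullback lam f = 0 -> vanishes_on_X lam f) /\
  (* and its image is the subalgebra gen_subalg by the Newton lam-sums *)
  (forall g : {mpoly (R[i])[size lam]},
     (exists f : {mpoly (R[i])[n]}, invariant_on_X lam f /\ pullback lam f = g)
     <-> gen_subalg (fun p => exists k, (0 < k)%N /\ p = newton_sum (R[i]) lam k) g).
Proof.
split.
  by move=> f; apply: part1.
move=> g; split.
  by case=> f [hf <-]; apply: (part_hard Hsum).
exact: (part_easy Hsum).
Qed.
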